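(* Assume the standing setup with $Z=\mathbb{Z}/p$, $p$ prime. Let $G$ be a profinite group and $N_1\le N_2$ closed normal subgroups of $G$ contained in $\bar T(G)$, with projections $\pi_i\colon G\to G/N_i$. Inflation maps $H^2(G/N_2)_{\pi_2}$ onto $H^2(G/N_1)_{\pi_1}$; let $C_G(N_1,N_2)$ be the kernel of this map. Then there is a perfect bilinear map $$N_2/(N_2\cap N_1T(G))\times C_G(N_1,N_2)\to\mathbb{Z}/p.$$
   Context: Standing setup: all homomorphisms of profinite groups are continuous. For profinite groups $\mathbb{U}$ and $G$, $T^{\mathbb{U}}(G)$ denotes the intersection of the kernels of all continuous homomorphisms $G\to\mathbb{U}$. Fix a finite abelian group $Z$ and a nonempty set $\Omega$ of central extensions of profinite groups $\omega\colon 0\to Z\to\mathbb{U}_\omega\xrightarrow{\lambda_\omega}\bar{\mathbb{U}}_\omega\to1$ such that for every $\omega$: (I) there are finitely many continuous homomorphisms $\gamma_1,\dots,\gamma_n\colon\bar{\mathbb{U}}_\omega\to\mathbb{U}_\omega$ with $\bigcap_i\operatorname{Ker}(\gamma_i)=\{1\}$; (II) $Z$ embeds as a closed subgroup of $\bar{\mathbb{U}}_\omega$. For a profinite group $G$ set $T(G)=\bigcap_{\omega\in\Omega}T^{\mathbb{U}_\omega}(G)$ and $\bar T(G)=\bigcap_{\omega\in\Omega}T^{\bar{\mathbb{U}}_\omega}(G)$. Here $H^i(G)=H^i(G,\mathbb{Z}/p)$ with trivial action. $\alpha_\omega\in H^2(\bar{\mathbb{U}}_\omega)$ is the class of $\omega$,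 and $\bar\rho^*(\alpha_\omega)$ its pullback along $\bar\rho$. For $N\trianglelefteq G$ closed with projection $\pi\colon G\to G/N$, a continuous $\bar\rho\colon G/N\to\bar{\mathbb{U}}_\omega$ is $\pi$-liftable if there is a continuous $\rho\colon G\to\mathbb{U}_\omega$ with $\lambda_\omega\circ\rho=\bar\rho\circ\pi$, and $H^2(G/N)_\pi$ is the subgroup of $H^2(G/N)$ generated by all $\bar\rho^*(\alpha_\omega)$ with $\omega\in\Omega$ and $\bar\rho$ $\pi$-liftable. A bilinear map is perfect if both induced maps to the Pontrjagin duals are isomorphisms. *)

(* Defs.v *)
From HB Require Import structures.
From mathcomp Require Import all_boot all_order all_algebra.
From mathcomp Require Import all_classical topology.
Set Implicit Arguments. Unset Strict Implicit. Unset Printing Implicit Defensive.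
Import GRing.Theory.
Local Open Scope ring_scope.
Local Open Scope classical_set_scope.

Record profinite := Profinite {
  pcar :> topologicalType;
  pmul : pcar -> pcar -> pcar;
  pinv : pcar -> pcar;
  pone : pcar;
  pmulA : forall x y z, pmul x (pmul y z) = pmul (pmul x y) z;
  pmul1 : forall x, pmul pone x = x;
  pmulV : forall x, pmul (pinv x) x = pone;
  pmul_cont : continuous (fun xy : pcar * pcar => pmul xy.1 xy.2);
  pinv_cont : continuous pinv;
  p_compact : compact [set: pcar];
  p_hausdorff : hausdorff_space pcar;
  p_tdisc : totally_disconnected [set: pcar] }.

Arguments pmul {_}. Arguments pinv {_}. Arguments pone {_}.

Definition chom (G H : profinite) (f : G -> H) :=
  (forall x y, f (pmul x y) = pmul (f x) (f y)) /\ continuous f.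

Definition closed_normal (G : profinite) (N : set G) :=
  closed N /\ N pone /\ (forall x y, N x -> N y -> N (pmul x y)) /\
  (forall x, N x -> N (pinv x)) /\
  (forall g x, N x -> N (pmul (pmul (pinv g) x) g)).

Definition TU (U G : profinite) : set G :=
  [set x | forall f : G -> U, chom f -> f x = pone].

(* eiota : Z/p -> U is the inclusion of the kernel, ezeta a left inverse of it,
   esec a continuous set-theoretic section of elam (exists for profinite groups;
   it is used only to write down the class alpha_omega, which does not depend on
   the chosen section). *)
Record ext (p : nat) := Ext {
  eU : profinite;
  eUb : profinite;
  elam : eU -> eUb;
  eiota : 'Z_p -> eU;
  ezeta : eU -> 'Z_p;
  esec : eUb -> eU;
  elam_chom : chom elam;
  eiota_hom : forall a b, eiota (a + b) = pmul (eiota a) (eiota b);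
  ezeta_iota : forall a, ezeta (eiota a) = a;
  eker : forall u, elam u = pone <-> exists a, u = eiota a;
  ecentral : forall a u, pmul (eiota a) u = pmul u (eiota a);
  esec_cont : continuous esec;
  esec_sec : forall b, elam (esec b) = b }.
Arguments eU {p} e. Arguments eUb {p} e.
Arguments elam {p} e _. Arguments eiota {p} e _. Arguments ezeta {p} e _.
Arguments esec {p} e _.

(* A normalized-by-section factor set representing alpha_omega in H^2(Ubar, Z/p):
   s(a) s(b) = iota(f(a,b)) s(ab). *)
Definition factor_set p (w : ext p) (a b : eUb w) : 'Z_p :=
  ezeta w (pmul (pmul (esec w a) (esec w b)) (pinv (esec w (pmul a b)))).

Arguments factor_set {p} w _ _.

Definition condI p (w : ext p) :=
  exists n (gs : 'I_n -> eUb w -> eU w),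
    (forall i, chom (gs i)) /\
    (forall x, (forall i, gs i x = pone) -> x = pone).

Definition condII p (w : ext p) :=
  exists j : 'Z_p -> eUb w,
    (forall a b, j (a + b) = pmul (j a) (j b)) /\ injective j /\ closed (range j).

Definition Tset p (Om : ext p -> Prop) (G : profinite) : set G :=
  [set x | forall w, Om w -> @TU (eU w) G x].
Definition Tbar p (Om : ext p -> Prop) (G : profinite) : set G :=
  [set x | forall w, Om w -> @TU (eUb w) G x].
Arguments Tset {p} Om G _. Arguments Tbar {p} Om G _.

(* ---------- Continuous cohomology of G/N with Z/p coefficients ----------
   Continuous cochains on (G/N)^k are encoded as continuous (= locally constant,
   Z/p being discrete) cochains on G^k that are N-invariant in every variable. *)
Definition lc1 (G : profinite) p (g : G -> 'Z_p) :=
  forall x : G, \forall y \near x, g y = g x.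
Definition lc2 (G : profinite) p (f : G -> G -> 'Z_p) :=
  forall xy : G * G, \forall z \near xy, f z.1 z.2 = f xy.1 xy.2.
Definition inv1 (G : profinite) p (N : set G) (g : G -> 'Z_p) :=
  forall x n, N n -> g (pmul x n) = g x.
Definition inv2 (G : profinite) p (N : set G) (f : G -> G -> 'Z_p) :=
  forall x y n m, N n -> N m -> f (pmul x n) (pmul y m) = f x y.
Definition cocycle2 (G : profinite) p (f : G -> G -> 'Z_p) :=
  forall x y z, f y z - f (pmul x y) z + f x (pmul y z) - f x y = 0.
Definition cobound (G : profinite) p (g : G -> 'Z_p) : G -> G -> 'Z_p :=
  fun x y => g y - g (pmul x y) + g x.

Definition Z2 (G : profinite) p (N : set G) (f : G -> G -> 'Z_p) :=
  lc2 f /\ inv2 N f /\ cocycle2 f.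
Definition cohom (G : profinite) p (N : set G) (f h : G -> G -> 'Z_p) :=
  exists g : G -> 'Z_p, lc1 g /\ inv1 N g /\ forall x y, f x y - h x y = cobound g x y.

(* pi-liftable rhobar : G/N -> Ubar, encoded as rhobar o pi : G -> Ubar *)
Definition liftable (G : profinite) p (N : set G) (w : ext p) (rb : G -> eUb w) :=
  chom rb /\ (forall n, N n -> rb n = pone) /\
  exists r : G -> eU w, chom r /\ forall x, elam w (r x) = rb x.

Arguments liftable {G p} N w rb.

Definition pullback (G : profinite) p (w : ext p) (rb : G -> eUb w) : G -> G -> 'Z_p :=
  fun x y => factor_set w (rb x) (rb y).

(* finite sums of the generators rhobar^*(alpha_omega) (Z/p-span) *)
Inductive gen (G : profinite) p (Om : ext p -> Prop) (N : set G) : (G -> G -> 'Z_p) -> Prop :=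
  | gen0 : gen Om N (fun _ _ => 0)
  | genS (w : ext p) (rb : G -> eUb w) c :
      Om w -> liftable N w rb -> gen Om N c ->
      gen Om N (fun x y => c x y + pullback rb x y).

Definition H2pi (G : profinite) p (Om : ext p -> Prop) (N : set G) (f : G -> G -> 'Z_p) :=
  Z2 N f /\ exists h, gen Om N h /\ cohom N f h.

(* cocycles whose class lies in C_G(N1,N2) = ker(inf : H^2(G/N2)_pi2 -> H^2(G/N1)_pi1) *)
Definition CG (G : profinite) p (Om : ext p -> Prop) (N1 N2 : set G) (f : G -> G -> 'Z_p) :=
  H2pi Om N2 f /\ cohom N1 f (fun _ _ => 0).

Definition Mset (G : profinite) p (Om : ext p -> Prop) (N1 N2 : set G) : set G :=
  [set n | N2 n /\ exists a t, N1 a /\ Tset Om G t /\ n = pmul a t].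

(* B : N2/(N2 /\ N1 T(G)) x C_G(N1,N2) -> Z/p is a perfect bilinear map,
   written on representatives (elements of N2, cocycles in CG). *)
Definition perfect_pairing (G : profinite) p (Om : ext p -> Prop) (N1 N2 : set G)
    (B : G -> (G -> G -> 'Z_p) -> 'Z_p) :=
  let C := CG Om N1 N2 in
  let M := Mset Om N1 N2 in
  (forall n n' c, N2 n -> N2 n' -> C c -> M (pmul n (pinv n')) -> B n c = B n' c) /\
  (forall n c c', N2 n -> C c -> C c' -> cohom N2 c c' -> B n c = B n c') /\
  (forall n n' c, N2 n -> N2 n' -> C c -> B (pmul n n') c = B n c + B n' c) /\
  (forall n c c', N2 n -> C c -> C c' -> B n (fun x y => c x y + c' x y) = B n c + B n c') /\
  (forall c, C c -> forall n, N2 n -> \forall m \near n, N2 m -> B m c = B n c) /\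
  (* N2/M -> Hom(C_G, Z/p) is bijective *)
  (forall n, N2 n -> (forall c, C c -> B n c = 0) -> M n) /\
  (forall chi : (G -> G -> 'Z_p) -> 'Z_p,
     (forall c c', C c -> C c' -> cohom N2 c c' -> chi c = chi c') ->
     (forall c c', C c -> C c' -> chi (fun x y => c x y + c' x y) = chi c + chi c') ->
     exists n, N2 n /\ forall c, C c -> chi c = B n c) /\
  (* C_G -> Hom_cont(N2/M, Z/p) is bijective *)
  (forall c, C c -> (forall n, N2 n -> B n c = 0) -> cohom N2 c (fun _ _ => 0)) /\
  (forall psi : G -> 'Z_p,
     (forall n n', N2 n -> N2 n' -> psi (pmul n n') = psi n + psi n') ->
     (forall n, M n -> psi n = 0) ->
     (forall n, N2 n -> \forall m \near n, N2 m -> psi m = psi n) ->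
     exists c, C c /\ forall n, N2 n -> psi n = B n c).

(* Main.v *)
Require Import Defs.
From HB Require Import structures.
From mathcomp Require Import all_boot all_order all_algebra.
From mathcomp Require Import all_classical topology.
From mathcomp Require Import ring.
Set Implicit Arguments. Unset Strict Implicit. Unset Printing Implicit Defensive.
Import GRing.Theory.
Local Open Scope ring_scope.
Local Open Scope classical_set_scope.
Notation pinv := Defs.pinv.
Notation pmul := Defs.pmul.
Notation pone := Defs.pone.
Section Grp.
Variable G : profinite.
Implicit Types x y z : G.
Lemma pmulV' x : pmul x (pinv x) = pone.
Proof.
rewrite -(pmul1 (pmul x (pinv x))) -(pmulV (pinv x)) -pmulA.
by rewrite (pmulA (pinv x)) pmulV pmul1 pmulV.
Qed.
Lemma pmul1r x : pmul x pone = x.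
Proof. by rewrite -(pmulV x) pmulA pmulV' pmul1. Qed.
Lemma pmulK x y : pmul (pinv x) (pmul x y) = y.
Proof. by rewrite pmulA pmulV pmul1. Qed.
Lemma pmulKV x y : pmul x (pmul (pinv x) y) = y.
Proof. by rewrite pmulA pmulV' pmul1. Qed.
Lemma pmulI x y z : pmul x y = pmul x z -> y = z.
Proof. by move=> h; rewrite -(pmulK x y) h pmulK. Qed.
Lemma pmulIr x y z : pmul y x = pmul z x -> y = z.
Proof. by move=> h; rewrite -(pmul1r y) -(pmulV' x) pmulA h -pmulA pmulV' pmul1r. Qed.
Lemma pinv1 : pinv (pone : G) = pone.
Proof. by rewrite -[pinv _]pmul1r pmulV. Qed.
Lemma pinvK x : pinv (pinv x) = x.
Proof. by apply: (@pmulIr (pinv x)); rewrite pmulV pmulV'. Qed.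
Lemma pinvM x y : pinv (pmul x y) = pmul (pinv y) (pinv x).
Proof. apply: (@pmulIr (pmul x y)); rewrite pmulV -pmulA (pmulA (pinv x)) pmulV pmul1 pmulV //. Qed.
Lemma pidem x : pmul x x = x -> x = pone.
Proof. by move=> h; apply: (@pmulIr x); rewrite pmul1. Qed.
End Grp.

Lemma chom1 (G H : profinite) (f : G -> H) : chom f -> f pone = pone.
Proof. by case=> hm _; apply: pidem; rewrite -hm pmul1. Qed.
Lemma chomV (G H : profinite) (f : G -> H) x : chom f -> f (pinv x) = pinv (f x).
Proof.
move=> hf; apply: (@pmulIr _ (f x)); rewrite -hf.1 pmulV pmulV; exact: chom1.
Qed.
Section Ext.
Variables (p : nat) (w : ext p).
Local Notation U := (eU w).
Local Notation Ub := (eUb w).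
Local Notation io := (eiota w).
Local Notation ze := (ezeta w).
Local Notation s := (esec w).
Local Notation la := (elam w).

Lemma iota0 : io 0 = pone.
Proof. by apply: pidem; rewrite -eiota_hom addr0. Qed.
Lemma ker_iota u : la u = pone -> u = io (ze u).
Proof. by move=> /eker [a ->]; rewrite ezeta_iota. Qed.
Lemma la_iota a : la (io a) = pone.
Proof. by apply/eker; exists a. Qed.
Lemma ze_mul u v : la u = pone -> la v = pone -> ze (pmul u v) = ze u + ze v.
Proof. by move=> /ker_iota hu /ker_iota hv; rewrite hu hv -eiota_hom !ezeta_iota. Qed.

Lemma la_V u : la (pinv u) = pinv (la u).
Proof. exact: chomV (elam_chom w). Qed.
Lemma la_M u v : la (pmul u v) = pmul (la u) (la v).
Proof. exact: (elam_chom w).1. Qed.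

Lemma fs_ker a b : la (pmul (pmul (s a) (s b)) (pinv (s (pmul a b)))) = pone.
Proof. by rewrite !la_M la_V !esec_sec pmulV'. Qed.

Variables (G : profinite) (rb : G -> Ub) (r : G -> U).
Hypotheses (hrb : chom rb) (hr : chom r) (hlift : forall x, la (r x) = rb x).
Definition ee x := pmul (r x) (pinv (s (rb x))).
Lemma ee_ker x : la (ee x) = pone.
Proof. by rewrite /ee la_M la_V hlift esec_sec pmulV'. Qed.

Lemma ee_fs x y : factor_set w (rb x) (rb y) = ze (ee (pmul x y)) - ze (ee x) - ze (ee y).
Proof.
set A := rb x; set B := rb y.
have hAB : rb (pmul x y) = pmul A B by rewrite hrb.1.
set F := factor_set w A B.
have hk : pmul (pmul (s A) (s B)) (pinv (s (pmul A B))) = io F by apply: ker_iota; apply: fs_ker.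
have hx : r x = pmul (io (ze (ee x))) (s A).
  by rewrite -ker_iota ?ee_ker // /ee -pmulA pmulV pmul1r.
have hy : r y = pmul (io (ze (ee y))) (s B).
  by rewrite -ker_iota ?ee_ker // /ee -pmulA pmulV pmul1r.
have hsAB : pmul (s A) (s B) = pmul (io F) (s (pmul A B)).
  by rewrite -hk -pmulA pmulV pmul1r.
have he : ee (pmul x y) = io (ze (ee x) + ze (ee y) + F).
  move: (ze (ee x)) (ze (ee y)) hx hy => a b hx hy.
  rewrite {1}/ee hr.1 hAB hx hy.
  rewrite -(pmulA (io _) (s A)) (pmulA (s A) (io _)) -ecentral.
  rewrite -(pmulA (io b) (s A) (s B)) hsAB (pmulA (io b) (io F)) -eiota_hom.
  rewrite (pmulA (io a)) -eiota_hom -pmulA pmulV' pmul1r addrA //.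
rewrite he ezeta_iota -/F.
by ring.
Qed.

Lemma ee_N m x : rb m = pone -> ze (ee (pmul x m)) = ze (r m) + ze (ee x).
Proof.
move=> hm.
have hk : la (r m) = pone by rewrite hlift.
rewrite -ze_mul // ?ee_ker //.
rewrite /ee hr.1 hrb.1 hm pmul1r (ker_iota hk) -ecentral -ker_iota // pmulA //.
Qed.

Lemma ee_T t : rb t = pone -> r t = pone -> ee t = ee pone.
Proof. by move=> h1 h2; rewrite /ee h1 h2 (chom1 hr) (chom1 hrb). Qed.
End Ext.
Lemma lc_cont (T U : topologicalType) (f : T -> U) :
  (forall x, \forall y \near x, f y = f x) -> continuous f.
Proof. by move=> h x; apply: cvg_near_cst; exact: h. Qed.

Lemma haus_near (T : topologicalType) : hausdorff_space T ->
  forall q q' : T, q != q' -> \forall z \near q, z != q'.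
Proof.
move=> hT q q' hne; case: (pselect (\forall z \near q, z != q')) => // h.
exfalso; move/eqP: hne; apply; apply: hT => A B hA hB; exists q'; split.
  apply: contrapT => nA; apply: h; apply: filterS hA => z Az.
  by apply/eqP => ez; apply: nA; rewrite -ez.
exact: nbhs_singleton.
Qed.

Lemma lc_ker p (w : ext p) (G : profinite) (u : G -> eU w) :
  continuous u -> (forall x, elam w (u x) = pone) -> lc1 (fun x => ezeta w (u x)).
Proof.
move=> cu hu x.
have : \forall y \near x, forall b : 'Z_p, b != ezeta w (u x) -> u y != eiota w b.
  apply: filter_forall => b.
  case: (eqVneq b (ezeta w (u x))) => [->|hb]; first by apply: filterE => y /=.
  have hne : u x != eiota w b.
    apply/eqP => e; move/eqP: hb; apply; by rewrite e ezeta_iota.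
  have := haus_near (@p_hausdorff (eU w)) hne.
  move=> /(cu x) hh; have hh2 : \forall y \near x, u y != eiota w b := hh.
  by apply: filterS hh2 => y hy _.
apply: filterS => y hy /=.
case: (eqVneq (ezeta w (u y)) (ezeta w (u x))) => // hb.
by have := hy _ hb; rewrite -ker_iota ?eqxx.
Qed.

Lemma lc2_cobound (G : profinite) p (g : G -> 'Z_p) : lc1 g -> lc2 (cobound g).
Proof.
move=> hg [x y].
have h1 : \forall z \near (x, y), g z.1 = g x.
  exact: (@cvg_fst _ _ (nbhs x) (nbhs y) _ _ (hg x)).
have h2 : \forall z \near (x, y), g z.2 = g y.
  exact: (@cvg_snd _ _ (nbhs x) (nbhs y) _ _ (hg y)).
have h3 : \forall z \near (x, y), g (pmul z.1 z.2) = g (pmul x y).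
  exact: (@pmul_cont G (x, y) _ (hg (pmul x y))).
apply: filterS (filterI h1 (filterI h2 h3)) => z [a [b c]].
by rewrite /cobound /= a b c.
Qed.

Lemma closed_lc (T : topologicalType) V (N : set T) (f : T -> V) (P : set V) :
  closed N -> (forall n, N n -> \forall m \near n, N m -> f m = f n) ->
  closed [set x | N x /\ P (f x)].
Proof.
move=> cN hf x hx.
have Nx : N x.
  apply: cN => B hB; have [y [[Ny _] By]] := hx B hB; by exists y.
split=> //; have [y [[Ny Py] hy]] := hx _ (hf x Nx).
by rewrite -hy.
Qed.

Lemma closed_eq (T U : topologicalType) (f : T -> U) (v : U) :
  hausdorff_space U -> continuous f -> closed [set x | f x = v].
Proof.
move=> hU cf x hx; apply: hU => A B hA hB.
have [y [/= fy Ay]] := hx _ (cf x _ hA).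
by exists v; split; [rewrite -fy|exact: nbhs_singleton].
Qed.

Lemma fip (T : topologicalType) (K : set T) (I : choiceType) (D : set I) (f : I -> set T) :
  compact K -> (forall i, D i -> closed (f i)) ->
  (forall s : seq I, (forall i, i \in s -> D i) -> exists x, K x /\ forall i, i \in s -> f i x) ->
  exists x, K x /\ forall i, D i -> f i x.
Proof.
move=> cK cf hs.
case: (pselect (exists i, D i)) => [[i0 Di0]|nD]; last first.
  have [|x [Kx _]] := hs [::]; first by move=> i; rewrite in_nil.
  exists x; split=> // i Di; exfalso; apply: nD; by exists i.
pose g i := K `&` f i.
have fg : finI D g.
  move=> D' sD'; have [x [Kx hx]] := hs (finmap.enum_fset D') (fun i hi => set_mem (sD' i hi)).
  exists x => i /= hi; split=> //; exact: hx.
have [|q [Kq clq]] := cK _ (finI_filter fg).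
  exists (g i0); first exact: finI_from1.
  by move=> y [].
exists q; split=> // j Dj; apply: (cf j Dj) => B hB.
have Fg : filter_from (finI_from D g) id (g j) by exists (g j) => //; exact: finI_from1.
have [y [[_ fy] By]] := clq (g j) B Fg hB.
by exists y.
Qed.
Section LA.
Variables (p : nat) (pp : prime p).
Local Notation Z := 'Z_p.

Lemma Zp_unit (x : Z) : x != 0 -> x \is a GRing.unit.
Proof.
move=> hx; have p1 : (1 < p)%N by apply: prime_gt1.
rewrite -(natr_Zp x) unitZpE // prime_coprime //.
have hlt : ((x : nat) < p)%N by have := ltn_ord x; move: (nat_of_ord x) => n; rewrite Zp_cast.
have hpos : (0 < (x : nat))%N.
  case: (posnP x) => // h; exfalso; move/eqP: hx; apply; apply: val_inj; exact: h.
by rewrite gtnNdvd.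
Qed.

Lemma Zp_mulnat (c x : Z) : c * x = x *+ (c : nat).
Proof. by rewrite -{1}(natr_Zp c) mulr_natl. Qed.

Definition vcons k (c : Z) (t : 'I_k -> Z) : 'I_k.+1 -> Z :=
  fun i => if unlift ord0 i is Some j then t j else c.
Lemma vcons0 k c t : @vcons k c t ord0 = c.
Proof. by rewrite /vcons unlift_none. Qed.
Lemma vconsS k c t i : @vcons k c t (lift ord0 i) = t i.
Proof. by rewrite /vcons liftK. Qed.
Lemma vcons_eta k (u : 'I_k.+1 -> Z) : u = vcons (u ord0) (fun i => u (lift ord0 i)).
Proof.
apply: funext => i; rewrite /vcons; case: unliftP => [j ->|-> //]. by [].
Qed.

Lemma sumZ k (a : 'I_k.+1 -> Z) (u : 'I_k.+1 -> Z) :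
  \sum_i a i * u i = a ord0 * u ord0 + \sum_(i < k) a (lift ord0 i) * u (lift ord0 i).
Proof. by rewrite big_ord_recl. Qed.

Lemma sep k (W : ('I_k -> Z) -> Prop) (v : 'I_k -> Z) :
  W (fun _ => 0) -> (forall u u', W u -> W u' -> W (fun i => u i + u' i)) -> ~ W v ->
  exists a : 'I_k -> Z, (forall u, W u -> \sum_i a i * u i = 0) /\ \sum_i a i * v i != 0.
Proof.
elim: k W v => [|k IH] W v W0 WD nWv.
  exfalso; apply: nWv; have -> : v = (fun _ => 0) by apply: funext => -[].
  exact: W0.
have WN : forall n u, W u -> W (fun i => u i *+ n).
  move=> n u Wu; elim: n => [|n IHn]; first by under eq_fun do rewrite mulr0n.
  by under eq_fun do rewrite mulrS; apply: WD.
have WZ : forall c u, W u -> W (fun i => c * u i).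
  by move=> c u Wu; under eq_fun do rewrite Zp_mulnat; apply: WN.
case: (pselect (exists u, W u /\ u ord0 != 0)) => [[u0 [Wu0 hu0]]|hA].
- set c := (u0 ord0)^-1.
  set u1 := fun i => c * u0 i.
  have Wu1 : W u1 by apply: WZ.
  have hu1 : u1 ord0 = 1 by rewrite /u1 mulVr // Zp_unit.
  pose W' := fun t : 'I_k -> Z => exists u, W u /\ u ord0 = 0 /\ (fun i => u (lift ord0 i)) = t.
  pose v' := fun i => v (lift ord0 i) - v ord0 * u1 (lift ord0 i).
  have [|||a' [ha'W ha'v]] := IH W' v'.
  + by exists (fun _ => 0).
  + move=> t t' [u [Wu [hu0' <-]]] [u' [Wu' [hu0'' <-]]].
    exists (fun i => u i + u' i); split; first exact: WD.
    by rewrite hu0' hu0'' addr0.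
  + move=> [u [Wu [hu e]]]; apply: nWv.
    have -> : v = (fun i => u i + v ord0 * u1 i).
      rewrite [LHS]vcons_eta [RHS]vcons_eta; congr vcons.
        by rewrite hu hu1 add0r mulr1.
      apply: funext => i /=; have := congr1 (fun f => f i) e => /= ->.
      by rewrite /v' subrK.
    by apply: WD => //; apply: WZ.
  pose S := \sum_(i < k) a' i * u1 (lift ord0 i).
  have hY : forall z, \sum_(i < k) a' i * (z * u1 (lift ord0 i)) = S * z.
    move=> z; rewrite /S mulr_suml; apply: eq_bigr => i _; by rewrite mulrCA mulrC.
  exists (vcons (- S) a'); split.
  + move=> u Wu; rewrite sumZ vcons0.
    under eq_bigr do rewrite vconsS.
    have : W' (fun i => u (lift ord0 i) - u ord0 * u1 (lift ord0 i)).
      exists (fun i => u i + (- u ord0) * u1 i); split; first by apply: WD => //; apply: WZ.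
      split; first by rewrite hu1 mulr1 subrr.
      by apply: funext => i; rewrite mulNr.
    move/ha'W => /= h; rewrite (eq_bigr _ (fun i _ => mulrBr _ _ _)) sumrB hY in h.
    by rewrite mulNr addrC.
  + rewrite sumZ vcons0; under eq_bigr do rewrite vconsS.
    move: ha'v; rewrite /v' (eq_bigr _ (fun i _ => mulrBr _ _ _)) sumrB hY.
    by rewrite mulNr addrC.
- have hA' : forall u, W u -> u ord0 = 0.
    by move=> u Wu; apply: contrapT => h; apply: hA; exists u; split=> //; apply/eqP.
  case: (eqVneq (v ord0) 0) => hv0; last first.
    exists (vcons 1 (fun _ => 0)); split.
    + move=> u Wu; rewrite sumZ vcons0 hA' // mulr0 add0r.
      by apply: big1 => i _; rewrite vconsS mul0r.
    + rewrite sumZ vcons0 mul1r big1 ?addr0 // => i _; by rewrite vconsS mul0r.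
  pose W' := fun t : 'I_k -> Z => exists u, W u /\ (fun i => u (lift ord0 i)) = t.
  have [|||a' [ha'W ha'v]] := IH W' (fun i => v (lift ord0 i)).
  + by exists (fun _ => 0).
  + move=> t t' [u [Wu <-]] [u' [Wu' <-]].
    by exists (fun i => u i + u' i); split; first exact: WD.
  + move=> [u [Wu hu]]; apply: nWv.
    have -> : v = u by rewrite [LHS]vcons_eta [RHS]vcons_eta hv0 hA' // hu.
    exact: Wu.
  exists (vcons 0 a'); split.
  + move=> u Wu; rewrite sumZ vcons0 mul0r add0r.
    under eq_bigr do rewrite vconsS.
    by apply: ha'W; exists u.
  + by rewrite sumZ vcons0 mul0r add0r; under eq_bigr do rewrite vconsS.
Qed.
End LA.
Section LC.
Variables (G : profinite) (p : nat).
Lemma lc1_cst (a : 'Z_p) : lc1 (fun _ : G => a).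
Proof. by move=> x; apply: filterE. Qed.
Lemma lc1_add (g h : G -> 'Z_p) : lc1 g -> lc1 h -> lc1 (fun x => g x + h x).
Proof. by move=> hg hh x; apply: filterS (filterI (hg x) (hh x)) => y [-> ->]. Qed.
Lemma lc1_opp (g : G -> 'Z_p) : lc1 g -> lc1 (fun x => - g x).
Proof. by move=> hg x; apply: filterS (hg x) => y ->. Qed.
Lemma lc1_sub (g h : G -> 'Z_p) : lc1 g -> lc1 h -> lc1 (fun x => g x - h x).
Proof. by move=> hg hh; apply: lc1_add => //; apply: lc1_opp. Qed.
Lemma lc2_add (f h : G -> G -> 'Z_p) : lc2 f -> lc2 h -> lc2 (fun x y => f x y + h x y).
Proof. by move=> hg hh x; apply: filterS (filterI (hg x) (hh x)) => y [-> ->]. Qed.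
Lemma lc2_cst (a : 'Z_p) : lc2 (fun _ _ : G => a).
Proof. by move=> x; apply: filterE. Qed.
Lemma cobound_cocycle (g : G -> 'Z_p) : cocycle2 (cobound g).
Proof. by move=> x y z; rewrite /cobound pmulA; ring. Qed.
Lemma cocycle_add (f h : G -> G -> 'Z_p) : cocycle2 f -> cocycle2 h -> cocycle2 (fun x y => f x y + h x y).
Proof.
move=> hf hh x y z; have := hf x y z; have := hh x y z.
move=> e1 e2; rewrite -[RHS](addr0 0) -{1}e1 -e2; ring.
Qed.
End LC.

Lemma ee_cont p (w : ext p) (G : profinite) (rb : G -> eUb w) (r : G -> eU w) :
  chom rb -> chom r -> continuous (ee rb r).
Proof.
move=> hrb hr x; rewrite /ee.
apply: (@continuous2_cvg _ _ _ _ _ _ r (fun x => pinv (esec w (rb x))) pmul).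
- exact: (@pmul_cont (eU w) (r x, pinv (esec w (rb x)))).
- exact: hr.2.
- apply: (@continuous_comp _ _ _ (fun x => esec w (rb x)) pinv).
  + apply: continuous_comp; first exact: hrb.2.
    exact: esec_cont.
  + exact: pinv_cont.
Qed.
Section Main.
Variables (p : nat) (pp : prime p) (Om : ext p -> Prop) (Om_ne : exists w, Om w)
  (Om_II : forall w, Om w -> condII w)
  (G : profinite) (N1 N2 : set G)
  (hN1 : closed_normal N1) (hN2 : closed_normal N2)
  (N12 : N1 `<=` N2) (N2T : N2 `<=` Tbar Om G).

Local Notation Z := 'Z_p.

Lemma N2_1 : N2 pone. Proof. by case: hN2 => _ []. Qed.
Lemma N2_M x y : N2 x -> N2 y -> N2 (pmul x y). Proof. by case: hN2 => _ [_ [h _]]; exact: h. Qed.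
Lemma N2_V x : N2 x -> N2 (pinv x). Proof. by case: hN2 => _ [_ [_ [h _]]]; exact: h. Qed.
Lemma N2_cl : closed N2. Proof. by case: hN2. Qed.
Lemma N1_1 : N1 pone. Proof. by case: hN1 => _ []. Qed.
Lemma N1_cl : closed N1. Proof. by case: hN1. Qed.

Lemma lin (a b c d : Z) : a - b = c - d -> c = d -> a = b.
Proof. by move=> h e; apply/eqP; rewrite -subr_eq0 h e subrr. Qed.

Definition psi (g : G -> Z) n := g n - g pone.

Lemma psi_shift (g : G -> Z) : inv2 N2 (cobound g) ->
  forall x n, N2 n -> g (pmul x n) = g x + psi g n.
Proof.
move=> hc x n hn; have := hc x pone pone n N2_1 hn.
rewrite pmul1 pmul1r /cobound /psi pmul1r => e.
apply: (lin _ (esym e)); ring.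
Qed.

Lemma psiM (g : G -> Z) : inv2 N2 (cobound g) ->
  forall n m, N2 n -> N2 m -> psi g (pmul n m) = psi g n + psi g m.
Proof. by move=> hc n m hn hm; rewrite {1}/psi (psi_shift hc) // /psi; ring. Qed.

Lemma kill_hom (k : G -> Z) : lc1 k -> (forall x y, cobound k x y = 0) ->
  forall n, N2 n -> k n = 0.
Proof.
move=> hk hc n hn.
have [w Omw] := Om_ne.
have [j [jhom [jinj _]]] := Om_II Omw.
have kM : forall x y, k (pmul x y) = k x + k y.
  move=> x y; have := hc x y; rewrite /cobound => e.
  apply: (lin _ (esym e)); ring.
have cf : chom (fun x => j (k x)).
  split; first by move=> x y; rewrite kM jhom.
  apply: lc_cont => x; apply: filterS (hk x) => y ->; done.
have := N2T hn Omw cf => /=.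
have j0 : j 0 = pone by apply: pidem; rewrite -jhom addr0.
by rewrite -j0 => /jinj.
Qed.

Lemma wd (g g' h : G -> Z) : lc1 g -> lc1 g' -> lc1 h -> inv1 N2 h ->
  (forall x y, cobound g x y - cobound g' x y = cobound h x y) ->
  forall n, N2 n -> psi g n = psi g' n.
Proof.
move=> hg hg' hh ih e n hn.
pose k := fun x => g x - g' x - h x.
have lk : lc1 k by apply: lc1_sub => //; apply: lc1_sub.
have ck : forall x y, cobound k x y = 0.
  move=> x y; have := e x y; rewrite /cobound /k => e'.
  apply: (lin _ e'); ring.
have k1 := kill_hom lk ck N2_1.
have kn := kill_hom lk ck hn.
have hn1 : h n = h pone by rewrite -{1}(pmul1 n) ih.
move: k1 kn; rewrite /psi /k => k1 kn.
have e2 : g n - g' n - h n - (g pone - g' pone - h pone) = 0 by rewrite k1 kn subrr.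
apply: (lin _ e2); rewrite hn1; ring.
Qed.
Definition gprop (c : G -> G -> Z) (g : G -> Z) :=
  lc1 g /\ inv1 N1 g /\ forall x y, c x y = cobound g x y.

Definition gof (c : G -> G -> Z) : G -> Z :=
  match pselect (exists g, gprop c g) with
  | left h => projT1 (cid h)
  | right _ => fun _ => 0
  end.

Lemma gofP c : (exists g, gprop c g) -> gprop c (gof c).
Proof.
rewrite /gof => h; case: pselect => [h'|//].
exact: (projT2 (cid h')).
Qed.

Local Notation C := (CG Om N1 N2).
Local Notation M := (Mset Om N1 N2).

Lemma C_g c : C c -> exists g, gprop c g.
Proof.
move=> [_ [g [hg [ig e]]]]; exists g; split=> //; split=> // x y.
by rewrite -e subr0.
Qed.

Definition B (n : G) (c : G -> G -> Z) := psi (gof c) n.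

Lemma C_inv2 c : C c -> inv2 N2 c.
Proof. by move=> [[[_ []]]]. Qed.

Lemma C_gof c : C c -> gprop c (gof c).
Proof. by move=> hc; apply: gofP; apply: C_g. Qed.

Lemma C_inv2g c : C c -> inv2 N2 (cobound (gof c)).
Proof.
move=> hc; have [_ [_ e]] := C_gof hc.
move=> x y n m hn hm; rewrite -!e; exact: C_inv2.
Qed.

Lemma gen_split h : gen Om N2 h -> exists g0 : G -> Z, lc1 g0 /\ (forall x y, h x y = cobound g0 x y) /\
  forall t, N2 t -> Tset Om G t -> g0 t = g0 pone.
Proof.
elim=> [|w rb c Omw [crb [kill [r [cr hl]]]] gc [g0 [lg0 [eg0 tg0]]]].
  exists (fun _ => 0); split; first exact: lc1_cst.
  by split=> [x y|//]; rewrite /cobound; ring.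
exists (fun x => g0 x - ezeta w (ee rb r x)); split.
  apply: lc1_sub => //; apply: lc_ker; first exact: ee_cont.
  exact: ee_ker.
split.
  move=> x y; rewrite eg0 /pullback (ee_fs crb cr hl) /cobound; ring.
move=> t nt tt; rewrite tg0 // (ee_T crb cr) //; first exact: kill.
exact: (tt w Omw).
Qed.

Lemma psiT c : C c -> forall t, N2 t -> Tset Om G t -> B t c = 0.
Proof.
move=> hc t nt tt.
have [lg [ig eg]] := C_gof hc.
have [[_ [h [gh [k [lk [ik ek]]]]]] _] := hc.
have [g0 [lg0 [eg0 tg0]]] := gen_split gh.
rewrite /B (@wd _ g0 k) //; first by rewrite /psi tg0 // subrr.
by move=> x y; rewrite -eg -eg0 ek.
Qed.

Lemma psiN1 c : C c -> forall a, N1 a -> B a c = 0.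
Proof.
move=> hc a na; have [lg [ig eg]] := C_gof hc.
by rewrite /B /psi -{1}(pmul1 a) ig // subrr.
Qed.

Lemma psiMset c : C c -> forall m, M m -> B m c = 0.
Proof.
move=> hc m [nm [a [t [na [tt e]]]]].
have nt : N2 t by rewrite -(pmulK a t) -e; apply: N2_M => //; apply: N2_V; exact: N12.
by rewrite e /B (psiM (C_inv2g hc) (N12 na) nt) -/(B a c) -/(B t c) psiN1 // psiT // addr0.
Qed.

Lemma P1 n n' c : N2 n -> N2 n' -> C c -> M (pmul n (pinv n')) -> B n c = B n' c.
Proof.
move=> hn hn' hc hm.
have -> : n = pmul (pmul n (pinv n')) n' by rewrite -pmulA pmulV pmul1r.
by rewrite /B (psiM (C_inv2g hc) (N2_M hn (N2_V hn')) hn') -/(B _ c) psiMset // add0r.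
Qed.

Lemma P2 n c c' : N2 n -> C c -> C c' -> cohom N2 c c' -> B n c = B n c'.
Proof.
move=> hn hc hc' [k [lk [ik ek]]].
have [lg [ig eg]] := C_gof hc.
have [lg' [ig' eg']] := C_gof hc'.
rewrite /B (@wd (gof c) (gof c') k) //.
by move=> x y; rewrite -eg -eg' ek.
Qed.

Lemma P3 n n' c : N2 n -> N2 n' -> C c -> B (pmul n n') c = B n c + B n' c.
Proof. by move=> hn hn' hc; rewrite /B (psiM (C_inv2g hc)). Qed.

Lemma P4 n c c' : N2 n -> C c -> C c' -> B n (fun x y => c x y + c' x y) = B n c + B n c'.
Proof.
move=> hn hc hc'.
have [lg [ig eg]] := C_gof hc.
have [lg' [ig' eg']] := C_gof hc'.
have hs : gprop (fun x y => c x y + c' x y) (fun x => gof c x + gof c' x).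
  split; first exact: lc1_add.
  split; first by move=> x m hm; rewrite ig // ig'.
  by move=> x y; rewrite eg eg' /cobound; ring.
have [ls [is' es]] := gofP (ex_intro _ _ hs).
rewrite /B (@wd _ (fun x => gof c x + gof c' x) (fun _ => 0)) //.
- by rewrite /psi; ring.
- exact: lc1_add.
- exact: lc1_cst.
- by move=> x y; rewrite -es eg eg' /cobound; ring.
Qed.

Lemma P5 c : C c -> forall n, N2 n -> \forall m \near n, N2 m -> B m c = B n c.
Proof.
move=> hc n hn; have [lg _] := C_gof hc.
by apply: filterS (lg n) => m e _; rewrite /B /psi e.
Qed.

Lemma P8 c : C c -> (forall n, N2 n -> B n c = 0) -> cohom N2 c (fun _ _ => 0).
Proof.
move=> hc h0; have [lg [ig eg]] := C_gof hc.
exists (gof c); split=> //; split.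
  by move=> x n hn; rewrite (psi_shift (C_inv2g hc)) // -/(B n c) h0 // addr0.
by move=> x y; rewrite subr0 eg.
Qed.
Lemma fext2 (f h : G -> G -> Z) : (forall x y, f x y = h x y) -> f = h.
Proof. by move=> e; apply: funext => x; apply: funext => y. Qed.

Lemma gen_add (N : set G) h h' : gen Om N h -> gen Om N h' -> gen Om N (fun x y => h x y + h' x y).
Proof.
move=> gh; elim=> [|w rb c Omw lw gc IH].
  by have -> : (fun x y => h x y + 0) = h by apply: fext2 => x y; rewrite addr0.
have -> : (fun x y => h x y + (c x y + pullback rb x y)) =
          (fun x y => (h x y + c x y) + pullback rb x y) by apply: fext2 => x y; rewrite addrA.
exact: genS.
Qed.

Lemma gen_zero (N : set G) : gen Om N (fun _ _ => 0).
Proof. exact: gen0. Qed.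

Lemma gen_mul (N : set G) (a : Z) h : gen Om N h -> gen Om N (fun x y => a * h x y).
Proof.
move=> gh.
have -> : (fun x y => a * h x y) = (fun x y => h x y *+ (a : nat)) by apply: fext2 => x y; rewrite Zp_mulnat.
elim: (a : nat) => [|n IH].
  have -> : (fun x y => h x y *+ 0) = (fun _ _ => 0) by apply: fext2 => x y; rewrite mulr0n.
  exact: gen0.
have -> : (fun x y => h x y *+ n.+1) = (fun x y => h x y + h x y *+ n) by apply: fext2 => x y; rewrite mulrS.
exact: gen_add.
Qed.

Lemma gen_sum (N : set G) k (F : 'I_k -> G -> G -> Z) : (forall i, gen Om N (F i)) ->
  gen Om N (fun x y => \sum_(i < k) F i x y).
Proof.
elim: k F => [|k IH] F hF.
  have -> : (fun x y => \sum_(i < 0) F i x y) = (fun _ _ => 0) by apply: fext2 => x y; rewrite big_ord0.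
  exact: gen0.
have -> : (fun x y => \sum_(i < k.+1) F i x y) =
  (fun x y => \sum_(i < k) F (widen_ord (leqnSn k) i) x y + F ord_max x y).
  by apply: fext2 => x y; rewrite big_ord_recr.
apply: gen_add; last exact: hF.
by apply: (IH (fun i => F (widen_ord (leqnSn k) i))) => i.
Qed.

Lemma C0 : C (fun _ _ => 0).
Proof.
split; last by exists (fun _ => 0); split; [exact: lc1_cst|split=> // x y; rewrite /cobound; ring].
split.
  split; first exact: lc2_cst.
  by split=> // x y z; ring.
exists (fun _ _ => 0); split; first exact: gen0.
by exists (fun _ => 0); split; [exact: lc1_cst|split=> // x y; rewrite /cobound; ring].
Qed.

Lemma C_add c c' : C c -> C c' -> C (fun x y => c x y + c' x y).
Proof.
move=> [[[l1 [i1 y1]] [h [gh [k [lk [ik ek]]]]]] [g [lg [ig eg]]]].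
move=> [[[l1' [i1' y1']] [h' [gh' [k' [lk' [ik' ek']]]]]] [g' [lg' [ig' eg']]]].
split.
  split.
    split; first exact: lc2_add.
    split; first by move=> x y n m hn hm; rewrite i1 // i1'.
    exact: cocycle_add.
  exists (fun x y => h x y + h' x y); split; first exact: gen_add.
  exists (fun x => k x + k' x); split; first exact: lc1_add.
  split; first by move=> x n hn; rewrite ik // ik'.
  move=> x y; have := ek x y; have := ek' x y; rewrite /cobound => e1 e2.
  apply: (lin _ (f_equal2 +%R e1 e2)); rewrite /=; ring.
exists (fun x => g x + g' x); split; first exact: lc1_add.
split; first by move=> x n hn; rewrite ig // ig'.
move=> x y; have := eg x y; have := eg' x y; rewrite /cobound => e1 e2.
apply: (lin _ (f_equal2 +%R e1 e2)); rewrite /=; ring.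
Qed.

Lemma lin_comb (Phi : (G -> G -> Z) -> Z) :
  (forall c c', C c -> C c' -> Phi (fun x y => c x y + c' x y) = Phi c + Phi c') ->
  forall k (F : 'I_k -> G -> G -> Z) (a : 'I_k -> Z), (forall i, C (F i)) ->
  C (fun x y => \sum_(i < k) a i * F i x y) /\
  Phi (fun x y => \sum_(i < k) a i * F i x y) = \sum_(i < k) a i * Phi (F i).
Proof.
move=> hPhi.
have P0 : Phi (fun _ _ => 0) = 0.
  have := hPhi _ _ C0 C0.
  have -> : (fun x y : G => (0 : Z) + 0) = (fun _ _ => 0) by apply: fext2 => x y; rewrite addr0.
  by move=> e; apply: (lin _ (esym e)); ring.
have Pn : forall c n, C c -> C (fun x y => c x y *+ n) /\ Phi (fun x y => c x y *+ n) = Phi c *+ n.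
  move=> c n hc; elim: n => [|n [IHC IHP]].
    have -> : (fun x y => c x y *+ 0) = (fun _ _ => 0) by apply: fext2 => x y; rewrite mulr0n.
    by rewrite P0 mulr0n; split=> //; exact: C0.
  have -> : (fun x y => c x y *+ n.+1) = (fun x y => c x y + c x y *+ n) by apply: fext2 => x y; rewrite mulrS.
  by split; [exact: C_add|rewrite hPhi // IHP mulrS].
have Pa : forall c (a : Z), C c -> C (fun x y => a * c x y) /\ Phi (fun x y => a * c x y) = a * Phi c.
  move=> c a hc.
  have -> : (fun x y => a * c x y) = (fun x y => c x y *+ (a : nat)) by apply: fext2 => x y; rewrite Zp_mulnat.
  by rewrite Zp_mulnat; apply: Pn.
elim=> [|k IH] F a hF.
  have -> : (fun x y => \sum_(i < 0) a i * F i x y) = (fun _ _ => 0) by apply: fext2 => x y; rewrite big_ord0.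
  by rewrite big_ord0 P0; split=> //; exact: C0.
have -> : (fun x y => \sum_(i < k.+1) a i * F i x y) =
  (fun x y => \sum_(i < k) a (widen_ord (leqnSn k) i) * F (widen_ord (leqnSn k) i) x y + a ord_max * F ord_max x y).
  by apply: fext2 => x y; rewrite big_ord_recr.
have [IHC IHP] := IH (fun i => F (widen_ord (leqnSn k) i)) (fun i => a (widen_ord (leqnSn k) i)) (fun i => hF _).
have [hC hP] := Pa _ (a ord_max) (hF ord_max).
split; first exact: C_add.
by rewrite hPhi // IHP hP big_ord_recr.
Qed.
Definition rfam := {w : ext p & G -> eU w}.
Definition valid (f : rfam) := Om (projT1 f) /\ chom (projT2 f).
Definition rbf (f : rfam) : G -> eUb (projT1 f) := fun x => elam (projT1 f) (projT2 f x).
Definition phif (f : rfam) (n : G) : Z := ezeta (projT1 f) (projT2 f n).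
Definition gf (f : rfam) (x : G) : Z := - ezeta (projT1 f) (ee (rbf f) (projT2 f) x).
Definition pbf (f : rfam) := pullback (rbf f).

Section Valid.
Variables (f : rfam) (hf : valid f).
Local Notation w := (projT1 f).
Local Notation rho := (projT2 f).

Lemma rbf_chom : chom (rbf f).
Proof.
have [_ [hm hc]] := hf; split.
  by move=> x y; rewrite /rbf hm la_M.
move=> x; apply: continuous_comp; first exact: hc.
exact: (elam_chom w).2.
Qed.

Lemma rbf_kill n : N2 n -> rbf f n = pone.
Proof. move=> hn; exact: (N2T hn hf.1 rbf_chom). Qed.

Lemma rbf_lift : forall x, elam w (rho x) = rbf f x.
Proof. by []. Qed.

Lemma pbf_cob x y : pbf f x y = cobound (gf f) x y.
Proof. rewrite /pbf /pullback (ee_fs rbf_chom hf.2 rbf_lift) /cobound /gf; ring. Qed.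

Lemma gf_lc : lc1 (gf f).
Proof.
apply: lc1_opp; apply: lc_ker; first exact: (ee_cont rbf_chom hf.2).
exact: ee_ker.
Qed.

Lemma gf_shift x m : N2 m -> gf f (pmul x m) = gf f x - phif f m.
Proof.
move=> hm; rewrite /gf (ee_N rbf_chom hf.2 rbf_lift) ?rbf_kill // /phif; ring.
Qed.

Lemma rho_ker n : N2 n -> elam w (rho n) = pone.
Proof. exact: rbf_kill. Qed.

Lemma phifM n m : N2 n -> N2 m -> phif f (pmul n m) = phif f n + phif f m.
Proof. by move=> hn hm; rewrite /phif hf.2.1 ze_mul ?rho_ker. Qed.

Lemma phif1 : phif f pone = 0.
Proof. by rewrite /phif (chom1 hf.2) -(iota0 w) ezeta_iota. Qed.

Lemma rho_phi n : N2 n -> rho n = eiota w (phif f n).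
Proof. move=> hn; exact: ker_iota (rho_ker hn). Qed.

Lemma pbf_gen : gen Om N2 (pbf f).
Proof.
have -> : pbf f = (fun x y => 0 + pullback (rbf f) x y) by apply: fext2 => x y; rewrite add0r.
apply: genS; [exact: hf.1| |exact: gen0].
split; first exact: rbf_chom.
split; first exact: rbf_kill.
by exists rho; split; [exact: hf.2|].
Qed.

Lemma pbf_inv2 : inv2 N2 (pbf f).
Proof.
move=> x y n m hn hm; rewrite /pbf /pullback.
by rewrite !rbf_chom.1 (rbf_kill hn) (rbf_kill hm) !pmul1r.
Qed.
End Valid.

Section Comb.
Variables (k : nat) (F : 'I_k -> rfam) (a : 'I_k -> Z) (hF : forall i, valid (F i)).
Definition cF := fun x y => \sum_(i < k) a i * pbf (F i) x y.
Definition GF := fun x => \sum_(i < k) a i * gf (F i) x.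
Definition PhiF := fun n => \sum_(i < k) a i * phif (F i) n.

Lemma cF_cob x y : cF x y = cobound GF x y.
Proof.
rewrite /cF /GF /cobound -sumrB -big_split /=; apply: eq_bigr => i _.
by rewrite pbf_cob // /cobound; ring.
Qed.

Lemma GF_lc : lc1 GF.
Proof.
move=> x.
have : \forall y \near x, forall i, gf (F i) y = gf (F i) x.
  by apply: filter_forall => i; apply: gf_lc.
by apply: filterS => y hy; rewrite /GF; apply: eq_bigr => i _; rewrite hy.
Qed.

Lemma GF_shift x m : N2 m -> GF (pmul x m) = GF x - PhiF m.
Proof.
move=> hm; rewrite /GF /PhiF -sumrB; apply: eq_bigr => i _.
by rewrite gf_shift //; ring.
Qed.

Lemma comb_C : (forall m, N1 m -> PhiF m = 0) -> C cF /\ forall n, N2 n -> B n cF = - PhiF n.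
Proof.
move=> h1.
have ecF := fext2 cF_cob.
have hC : C cF.
  split.
    split.
      split; first by rewrite ecF; apply: lc2_cobound; exact: GF_lc.
      split.
        move=> x y n m hn hm; rewrite /cF; apply: eq_bigr => i _.
        by rewrite pbf_inv2.
      by rewrite ecF; exact: cobound_cocycle.
    exists cF; split.
      by apply: gen_sum => i; apply: gen_mul; apply: pbf_gen.
    exists (fun _ => 0); split; first exact: lc1_cst.
    by split=> // x y; rewrite subrr /cobound; ring.
  exists GF; split; first exact: GF_lc.
  split; first by move=> x m hm; rewrite GF_shift ?h1 ?subr0 //; exact: N12.
  by move=> x y; rewrite subr0 cF_cob.
split=> // n hn.
have [lg [ig eg]] := C_gof hC.
rewrite /B (@wd (gof cF) GF (fun _ => 0)) //.
- by rewrite /psi -{1}(pmul1 n) GF_shift //; ring.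
- exact: GF_lc.
- exact: lc1_cst.
- by move=> x y; rewrite -eg cF_cob /cobound; ring.
Qed.
End Comb.
Lemma N2_compact : compact N2.
Proof. exact: (subclosed_compact N2_cl (@p_compact G) (@subsetT _ N2)). Qed.

Lemma B1 c : B pone c = 0.
Proof. by rewrite /B /psi subrr. Qed.

Lemma chi0 (chi : (G -> G -> Z) -> Z) :
  (forall c c', C c -> C c' -> chi (fun x y => c x y + c' x y) = chi c + chi c') ->
  chi (fun _ _ => 0) = 0.
Proof.
move=> hadd; have := hadd _ _ C0 C0.
have -> : (fun x y : G => (0 : Z) + 0) = (fun _ _ => 0) by apply: fext2 => x y; rewrite addr0.
by move=> e; apply: (lin _ (esym e)); ring.
Qed.

Lemma P7 (chi : (G -> G -> Z) -> Z) :
  (forall c c', C c -> C c' -> cohom N2 c c' -> chi c = chi c') ->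
  (forall c c', C c -> C c' -> chi (fun x y => c x y + c' x y) = chi c + chi c') ->
  exists n, N2 n /\ forall c, C c -> chi c = B n c.
Proof.
move=> hinv hadd.
pose I := {classic (G -> G -> Z)}.
have [n [hn hall]] : exists x, N2 x /\ forall c : I, C c -> [set m | N2 m /\ B m c = chi c] x.
  apply: (@fip G N2 I (fun c : I => C c) (fun c => [set m | N2 m /\ B m c = chi c])
    N2_compact).
- move=> c hc; apply: (@closed_lc G Z N2 (fun m => B m c) (fun z => z = chi c) N2_cl).
  exact: P5.
- move=> s hs.
  pose k := size s.
  pose Fs := fun i : 'I_k => nth (fun _ _ => 0 : Z) s i.
  have hFs : forall i, C (Fs i) by move=> i; apply: hs; apply: mem_nth.
  pose W := fun u : 'I_k -> Z => exists m, N2 m /\ u = (fun i => B m (Fs i)).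
  case: (pselect (W (fun i => chi (Fs i)))) => [[m [hm e]]|nW].
    exists m; split=> // c hcs; split=> //.
    have hi : (index c s < k)%N by rewrite index_mem.
    have := congr1 (fun f => f (Ordinal hi)) e => /=.
    by rewrite /Fs /= nth_index.
  exfalso.
  have [||a [ha hv]] := @sep p pp k W (fun i => chi (Fs i)) _ _ nW.
  + exists pone; split; first exact: N2_1.
    by apply: funext => i; rewrite B1.
  + move=> u u' [m [hm ->]] [m' [hm' ->]]; exists (pmul m m'); split; first exact: N2_M.
    by apply: funext => i; rewrite P3.
  have [hC hchi] := lin_comb hadd a hFs.
  have hB : forall m, N2 m -> B m (fun x y => \sum_(i < k) a i * Fs i x y) = 0.
    move=> m hm; have [_ ->] := @lin_comb (B m) (fun c c' hc hc' => P4 hm hc hc') k Fs a hFs.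
    by apply: ha; exists m.
  have := hinv _ _ hC C0 (P8 hC hB).
  by rewrite hchi chi0 // => e; move: hv; rewrite e eqxx.
exists n; split=> // c hc; exact: (esym (hall c hc).2).
Qed.
Lemma Tset1 : Tset Om G pone.
Proof. move=> w _ f hf; exact: chom1. Qed.

Lemma valid_mk (w : ext p) (rho : G -> eU w) : Om w -> chom rho -> valid (existT _ w rho).
Proof. by move=> h1 h2; split. Qed.

Lemma r0 : rfam.
Proof. have [w _] := cid Om_ne; exact: (existT _ w (fun _ => pone)). Defined.


Definition pick (f : rfam -> set G) (S : set G) : rfam :=
  match pselect (exists r, valid r /\ S = f r) with
  | left h => projT1 (cid h)
  | right _ => r0
  end.

Lemma pickP f S : (exists r, valid r /\ S = f r) -> valid (pick f S) /\ S = f (pick f S).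
Proof. rewrite /pick => h; case: pselect => [h'|//]; exact: (projT2 (cid h')). Qed.

Lemma P6 n : N2 n -> (forall c, C c -> B n c = 0) -> M n.
Proof.
move=> hn hB; apply: contrapT => nM.
pose I := {classic (set G)}.
pose f := fun r : rfam => [set a : G | projT2 r a = projT2 r n].
pose D := fun S : I => exists r, valid r /\ S = f r.
have claim : ~ exists x, N1 x /\ forall S : I, D S -> S x.
  move=> [a [ha hr]]; apply: nM; split=> //.
  exists a, (pmul (pinv a) n); split=> //; split; last by rewrite pmulKV.
  move=> w Omw rho hrho.
  have := hr (f (existT _ w rho)) (ex_intro _ _ (conj (valid_mk Omw hrho) erefl)); rewrite /f /= => e.
  by rewrite hrho.1 (chomV _ hrho) e pmulV.
have [s [hs hnx]] : exists s : seq I, (forall i, i \in s -> D i) /\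
    ~ exists x, N1 x /\ forall i, i \in s -> (i : set G) x.
  apply: contrapT => H; apply: claim.
  apply: (@fip G N1 I D id).
  - exact: (subclosed_compact N1_cl (@p_compact G) (@subsetT _ N1)).
  - move=> S [r [hr ->]]; apply: closed_eq; first exact: p_hausdorff.
    exact: hr.2.2.
  - move=> s hs; apply: contrapT => hx; apply: H; exists s; split=> //.
set k := size s.
pose F := fun i : 'I_k => pick f (nth (set0 : I) s i).
have hFP : forall i : 'I_k, valid (F i) /\ nth (set0 : I) s i = f (F i).
  by move=> i; apply: pickP; apply: hs; apply: mem_nth.
have hF : forall i, valid (F i) by move=> i; case: (hFP i).
pose W := fun u : 'I_k -> Z => exists a, N1 a /\ u = (fun i => phif (F i) a).
have [|||al [hal hv]] := @sep p pp k W (fun i => phif (F i) n).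
- exists pone; split; first exact: N1_1.
  by apply: funext => i; rewrite phif1.
- move=> u u' [a [ha ->]] [a' [ha' ->]]; exists (pmul a a'); split.
    by case: hN1 => _ [_ [hm _]]; exact: hm.
  by apply: funext => i; rewrite phifM //; exact: N12.
- move=> [a [ha e]]; apply: hnx; exists a; split=> // S hS.
  have hi : (index S s < k)%N by rewrite index_mem.
  pose i := Ordinal hi.
  have := congr1 (fun f => f i) e => /= e'.
  have hSi : S = nth (set0 : I) s i by rewrite /= nth_index.
  rewrite hSi (hFP i).2 /f /= (rho_phi (hF i) hn) (rho_phi (hF i) (N12 ha)).
  by rewrite e'.
have [hC hBn] : C (cF F al) /\ forall n, N2 n -> B n (cF F al) = - PhiF F al n.
  by apply: comb_C => // m hm; apply: hal; exists m.
move: hv; rewrite -[X in X != _]opprK -/(PhiF F al n) -hBn // hB // oppr0 eqxx //.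
Qed.
Lemma P9 (psi0 : G -> Z) :
  (forall n n', N2 n -> N2 n' -> psi0 (pmul n n') = psi0 n + psi0 n') ->
  (forall n, M n -> psi0 n = 0) ->
  (forall n, N2 n -> \forall m \near n, N2 m -> psi0 m = psi0 n) ->
  exists c, C c /\ forall n, N2 n -> psi0 n = B n c.
Proof.
move=> hadd hM hlc.
pose I := {classic (set G)}.
pose f := fun r : rfam => [set m : G | projT2 r m = pone].
pose D := fun S : I => exists r, valid r /\ S = f r.
pose K := [set m | N2 m /\ (fun z => z <> 0) (psi0 m)].
have claim : ~ exists x, K x /\ forall S : I, D S -> S x.
  move=> [m [[hm hpm] hr]]; apply: hpm; apply: hM; split=> //.
  exists pone, m; split; first exact: N1_1.
  split; last by rewrite pmul1.
  move=> w Omw rho hrho.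
  exact: (hr (f (existT _ w rho)) (ex_intro _ _ (conj (valid_mk Omw hrho) erefl))).
have [s [hs hnx]] : exists s : seq I, (forall i, i \in s -> D i) /\
    ~ exists x, K x /\ forall i, i \in s -> (i : set G) x.
  apply: contrapT => H; apply: claim.
  apply: (@fip G K I D id).
  - apply: (subclosed_compact _ (@p_compact G) (@subsetT _ K)).
    exact: (@closed_lc G Z N2 psi0 (fun z => z <> 0) N2_cl hlc).
  - move=> S [r [hr ->]]; apply: closed_eq; first exact: p_hausdorff.
    exact: hr.2.2.
  - move=> s hs; apply: contrapT => hx; apply: H; exists s; split=> //.
set k := size s.
pose F := fun i : 'I_k => pick f (nth (set0 : I) s i).
have hFP : forall i : 'I_k, valid (F i) /\ nth (set0 : I) s i = f (F i).
  by move=> i; apply: pickP; apply: hs; apply: mem_nth.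
have hF : forall i, valid (F i) by move=> i; case: (hFP i).
have psi1 : psi0 pone = 0.
  apply: hM; split; first exact: N2_1.
  by exists pone, pone; split; [exact: N1_1|split; [exact: Tset1|rewrite pmul1]].
pose W := fun u : 'I_k.+1 -> Z => exists m, N2 m /\ u = vcons (psi0 m) (fun i => phif (F i) m).
have [|||be [hbe hv]] := @sep p pp k.+1 W (vcons 1 (fun _ => 0)).
- exists pone; split; first exact: N2_1.
  rewrite psi1; apply: funext => i; rewrite /vcons; case: unlift => // j.
  by rewrite phif1.
- move=> u u' [m [hm ->]] [m' [hm' ->]]; exists (pmul m m'); split; first exact: N2_M.
  apply: funext => i; rewrite /vcons; case: unlift => [j|]; last by rewrite hadd.
  by rewrite phifM.
- move=> [m [hm e]].
  have e0 := congr1 (fun f => f ord0) e; rewrite /= !vcons0 in e0.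
  have eS : forall i, phif (F i) m = 0.
    by move=> i; have := congr1 (fun f => f (lift ord0 i)) e; rewrite /= !vconsS.
  apply: hnx; exists m; split.
    split=> //; rewrite -e0 => /eqP; by rewrite oner_eq0.
  move=> S hS.
  have hi : (index S s < k)%N by rewrite index_mem.
  pose i := Ordinal hi.
  have hSi : S = nth (set0 : I) s i by rewrite /= nth_index.
  by rewrite hSi (hFP i).2 /f /= (rho_phi (hF i) hm) eS iota0.
move: hv; rewrite sumZ vcons0 mulr1 big1 ?addr0; last by move=> i _; rewrite vconsS mulr0.
move=> hb0.
pose al := fun i : 'I_k => (be ord0)^-1 * be (lift ord0 i).
have hPhi : forall m, N2 m -> PhiF F al m = - psi0 m.
  move=> m hm; have := hbe _ (ex_intro _ m (conj hm erefl)).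
  rewrite sumZ vcons0; under eq_bigr do rewrite vconsS.
  move=> e.
  have e' : \sum_(i < k) be (lift ord0 i) * phif (F i) m = - (be ord0 * psi0 m).
    by apply: (lin _ e); ring.
  rewrite /PhiF /al; under eq_bigr do rewrite -mulrA.
  rewrite -mulr_sumr e' mulrN mulrA mulVr ?mul1r //; exact: Zp_unit.
have [hC hBn] : C (cF F al) /\ forall n, N2 n -> B n (cF F al) = - PhiF F al n.
  apply: comb_C => // m hm; rewrite hPhi ?hM ?oppr0 //; last exact: N12.
  by split; [exact: N12|exists m, pone; split=> //; split; [exact: Tset1|rewrite pmul1r]].
exists (cF F al); split=> // n hn; by rewrite hBn // hPhi // opprK.
Qed.
Lemma gen_12 h : gen Om N2 h -> gen Om N1 h.
Proof.
elim=> [|w rb c Omw [crb [kill lift]] gc IH]; first exact: gen0.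
apply: genS => //; split=> //; split=> // n hn; apply: kill; exact: N12.
Qed.

Lemma gen_21 h : gen Om N1 h -> gen Om N2 h.
Proof.
elim=> [|w rb c Omw [crb [kill lift]] gc IH]; first exact: gen0.
apply: genS => //; split=> //; split=> // n hn; exact: (N2T hn Omw crb).
Qed.

Lemma gen_inv2 h : gen Om N2 h -> inv2 N2 h.
Proof.
elim=> [|w rb c Omw [crb [kill lift]] gc IH]; first by [].
move=> x y n m hn hm; rewrite IH // /pullback !crb.1 (kill n hn) (kill m hm) !pmul1r //.
Qed.

Lemma part1 :
  (forall f, H2pi Om N2 f -> H2pi Om N1 f) /\
  (forall f, H2pi Om N1 f -> exists f', H2pi Om N2 f' /\ cohom N1 f f').
Proof.
split.
  move=> f [[lf [if2 cf]] [h [gh [k [lk [ik ek]]]]]]; split.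
    split=> //; split=> // x y n m hn hm; apply: if2; exact: N12.
  exists h; split; first exact: gen_12.
  exists k; split=> //; split=> // x n hn; apply: ik; exact: N12.
move=> f [_ [h [gh ch]]].
have gh2 := gen_21 gh.
exists h; split=> //; split.
  have [g0 [lg0 [eg0 _]]] := gen_split gh2.
  have e := fext2 eg0.
  split; first by rewrite e; exact: lc2_cobound.
  split; first exact: gen_inv2.
  by rewrite e; exact: cobound_cocycle.
exists h; split=> //; exists (fun _ => 0); split; first exact: lc1_cst.
by split=> // x y; rewrite subrr /cobound; ring.
Qed.

Lemma main_sec :
  ((forall f, H2pi Om N2 f -> H2pi Om N1 f) /\
   (forall f, H2pi Om N1 f -> exists f', H2pi Om N2 f' /\ cohom N1 f f')) /\
  exists B : G -> (G -> G -> 'Z_p) -> 'Z_p, perfect_pairing Om N1 N2 B.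
Proof.
split; first exact: part1.
exists B; split; first exact: P1.
split; first exact: P2.
split; first exact: P3.
split; first exact: P4.
split; first exact: P5.
split; first exact: P6.
split; first exact: P7.
split; first exact: P8.
exact: P9.
Qed.
End Main.

Theorem theorem7p1 (p : nat) (p_prime : prime p) (Om : ext p -> Prop)
  (Om_ne : exists w, Om w)
  (Om_I : forall w, Om w -> condI w) (Om_II : forall w, Om w -> condII w)
  (G : profinite) (N1 N2 : set G)
  (hN1 : closed_normal N1) (hN2 : closed_normal N2)
  (N12 : N1 `<=` N2) (N2T : N2 `<=` Tbar Om G) :
  ((forall f, H2pi Om N2 f -> H2pi Om N1 f) /\
   (forall f, H2pi Om N1 f -> exists f', H2pi Om N2 f' /\ cohom N1 f f')) /\
  exists B : G -> (G -> G -> 'Z_p) -> 'Z_p, perfect_pairing Om N1 N2 B.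
Proof. exact: (main_sec p_prime Om_ne Om_II hN1 hN2 N12 N2T). Qed.
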